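(* Let $f,g\in L^2(\mathbb{R})$ and write $V=V(f,g)=U+iW$ with $U,W$ real-valued. Assume that $V\in C^3(\mathbb{R}^2,\mathbb{R}^2)$, that $V(x_0,\omega_0)=0$, and that $\det J_V(x_0,\omega_0)\neq 0$, where \[ J_V(x_0,\omega_0)=\begin{pmatrix} U_x(x_0,\omega_0) & U_\omega(x_0,\omega_0)\\ W_x(x_0,\omega_0) & W_\omega(x_0,\omega_0)\end{pmatrix}. \] Let $\psi(x,\omega)=\arg V(x,\omega)$ denote a (local differentiable) phase of $V$. Then $\lim_{x\to x_0}\frac{\partial\psi}{\partial x}(x,\omega_0)=c$ for some real number $c\in\mathbb{R}$.
   Context: The short-time Fourier transform is $V(f,g)(x,\omega)=\int_{\mathbb{R}} f(t)\overline{g(t-x)}e^{-2\pi i\omega t}\,dt$, regarded as a map $\mathbb{R}^2\to\mathbb{R}^2\cong\mathbb{C}$; $C^k$ refers to real differentiability in $(x,\omega)$ and subscripts denote partial derivatives. At points where $V\neq 0$, a differentiable phase $\psi$ with $V=|V|e^{i\psi}$ exists locally, is unique up to an additive constant in $2\pi\mathbb{Z}$, and its partial derivative is $\frac{\partial\psi}{\partial x}=\frac{U W_x-W U_x}{U^2+W^2}$ (independent of the choice of phase). *)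

(* Defs.v *)
From HB Require Import structures.
From mathcomp Require Import all_boot all_order all_algebra.
From mathcomp Require Import all_classical all_reals all_analysis.
Set Implicit Arguments. Unset Strict Implicit. Unset Printing Implicit Defensive.
Import Order.TTheory GRing.Theory Num.Theory.
Import numFieldNormedType.Exports.
Local Open Scope classical_set_scope.
Local Open Scope ring_scope.

(* A complex-valued function R -> C is represented by its real and imaginary
   parts (fr, fi). *)

Definition L2c (R : realType) (fr fi : R -> R) : Prop :=
  measurable_fun [set: R] fr /\ measurable_fun [set: R] fi /\
  (\int[@lebesgue_measure R]_(t in [set: R]) ((fr t ^+ 2 + fi t ^+ 2)%:E) < +oo)%E.

(* f(t) * conj(g(t-x)) = ar + i ai *)
Definition stft_ar (R : realType) (fr fi gr gi : R -> R) (x t : R) : R :=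
  fr t * gr (t - x) + fi t * gi (t - x).
Definition stft_ai (R : realType) (fr fi gr gi : R -> R) (x t : R) : R :=
  fi t * gr (t - x) - fr t * gi (t - x).

(* V(f,g)(x,w) = int f(t) conj(g(t-x)) e^{-2 pi i w t} dt = U + i W,
   with e^{-2 pi i w t} = cos(2 pi w t) - i sin(2 pi w t). *)
Definition stftU (R : realType) (fr fi gr gi : R -> R) (x w : R) : R :=
  Rintegral (@lebesgue_measure R) [set: R]
    (fun t => stft_ar fr fi gr gi x t * cos (2 * pi * w * t)
            + stft_ai fr fi gr gi x t * sin (2 * pi * w * t)).
Definition stftW (R : realType) (fr fi gr gi : R -> R) (x w : R) : R :=
  Rintegral (@lebesgue_measure R) [set: R]
    (fun t => stft_ai fr fi gr gi x t * cos (2 * pi * w * t)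
            - stft_ar fr fi gr gi x t * sin (2 * pi * w * t)).

Definition pdx (R : realType) (F : R -> R -> R) : R -> R -> R :=
  fun x w => derive1 (fun y => F y w) x.
Definition pdw (R : realType) (F : R -> R -> R) : R -> R -> R :=
  fun x w => derive1 (fun v => F x v) w.

Definition iterpd (R : realType) (s : seq bool) (F : R -> R -> R) : R -> R -> R :=
  foldr (fun b G => if b then pdx G else pdw G) F s.

(* F is C^k on R^2: all partial derivatives of order <= k exist everywhere
   and are (jointly) continuous.  This is the standard characterization of
   real C^k differentiability. *)
Definition Ck2 (R : realType) (k : nat) (F : R -> R -> R) : Prop :=
  forall s : seq bool, (size s <= k)%N ->
    continuous (fun p : R * R => iterpd s F p.1 p.2) /\
    ((size s < k)%N -> forall x w : R,
        derivable (fun y => iterpd s F y w) x 1 /\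
        derivable (fun v => iterpd s F x v) w 1).

(* d psi / dx for a phase psi of V = U + iW, at points where V <> 0
   (formula independent of the choice of phase). *)
Definition phase_dx (R : realType) (U W : R -> R -> R) (x w : R) : R :=
  (U x w * pdx W x w - W x w * pdx U x w) / (U x w ^+ 2 + W x w ^+ 2).

(* Main.v *)
Require Import Defs.
From HB Require Import structures.
From mathcomp Require Import all_boot all_order all_algebra.
From mathcomp Require Import all_classical all_reals all_analysis.
From mathcomp Require Import ring lra.
Import Order.TTheory GRing.Theory Num.Theory.
Import numFieldNormedType.Exports.
Local Open Scope classical_set_scope.
Local Open Scope ring_scope.
Lemma isd_cont {R : realType} (f df : R -> R) (x : R) : is_derive x (1:R) f (df x) -> {for x, continuous f}.
Proof.
move=> h; apply: differentiable_continuous; apply/derivable1_diffP.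
exact: derive.ex_derive.
Qed.

Lemma isd_sub {R : realType} x0 x : is_derive x (1:R) (fun y : R => y - x0) 1.
Proof.
have := @is_deriveB R R R id (cst x0) x 1 1 0 (is_derive_id _ _) (is_derive_cst _ _ _).
by rewrite subr0.
Qed.

Lemma in_ab {R : realType} (x0 : R) : x0 \in `]x0 - 1, x0 + 1[.
Proof. by rewrite in_itv /= ltrDl ltrBlDr ltrDl ltr01. Qed.

Lemma key1 {R : realType} (u u1 : R -> R) (x0 : R) :
  (forall x : R, is_derive x (1:R) u (u1 x)) -> {for x0, continuous u1} -> u x0 = 0 ->
  (u x / (x - x0)) @[x --> x0^'] --> u1 x0.
Proof.
move=> du cu1 u0.
have fdf : forall x, x \in `]x0 - 1, x0 + 1[ `\ x0 -> is_derive x (1:R) u (u1 x).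
  by move=> x _; apply: du.
have gdg : forall x, x \in `]x0 - 1, x0 + 1[ `\ x0 -> is_derive x (1:R) (fun y => y - x0) ((fun=> 1) x).
  by move=> x _; apply: isd_sub.
have fa0 : u x @[x --> x0] --> 0 by rewrite -u0; apply: isd_cont (du x0).
have ga0 : (x - x0) @[x --> x0] --> 0.
  rewrite -(subrr x0); apply: cvgB; [exact: cvg_id | exact: cvg_cst].
have cdg : forall x, x \in `]x0 - 1, x0 + 1[ `\ x0 -> (fun=> (1:R)) x != 0.
  by move=> x _; apply: oner_neq0.
apply: (lhopital (in_ab x0) fdf gdg fa0 ga0 cdg).
under eq_fun do rewrite divr1. exact: cu1.
Qed.
Lemma key2 {R : realType} (u u1 u2 : R -> R) (x0 : R) :
  (forall x : R, is_derive x (1:R) u (u1 x)) -> (forall x : R, is_derive x (1:R) u1 (u2 x)) ->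
  {for x0, continuous u2} -> u x0 = 0 ->
  ((u1 x * (x - x0) - u x) / (x - x0) ^+ 2) @[x --> x0^'] --> u2 x0 / 2.
Proof.
move=> du du1 cu2 u0.
pose df y := if y == x0 then u2 x0 else u2 y * (y - x0).
pose dg y := if y == x0 then 2 else 2 * (y - x0).
have fdf : forall x, x \in `]x0 - 1, x0 + 1[ `\ x0 ->
    is_derive x (1:R) (fun y => u1 y * (y - x0) - u y) (df x).
  move=> x; rewrite inE /= => -[_ /eqP /negbTE xx0]; rewrite /df xx0.
  have H := is_deriveB (is_deriveM (du1 x) (isd_sub x0 x)) (du x).
  apply: (is_derive_eq H).
  rewrite /GRing.scale /=; ring.
have gdg : forall x, x \in `]x0 - 1, x0 + 1[ `\ x0 ->
    is_derive x (1:R) (fun y => (y - x0) ^+ 2) (dg x).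
  move=> x; rewrite inE /= => -[_ /eqP /negbTE xx0]; rewrite /dg xx0.
  have H := is_deriveX 2 (isd_sub x0 x).
  apply: (is_derive_eq H).
  rewrite /GRing.scale /=; ring.
have fa0 : (u1 x * (x - x0) - u x) @[x --> x0] --> 0.
  have -> : 0 = u1 x0 * (x0 - x0) - u x0 by rewrite u0 subrr mulr0 subr0.
  apply: cvgB; last exact: isd_cont (du x0).
  apply: cvgM; first exact: isd_cont (du1 x0).
  apply: cvgB; [exact: cvg_id | exact: cvg_cst].
have ga0 : ((x - x0) ^+ 2) @[x --> x0] --> 0.
  have -> : 0 = (x0 - x0) * (x0 - x0) :> R by rewrite subrr mulr0.
  under eq_fun do rewrite expr2.
  apply: cvgM; apply: cvgB; (exact: cvg_id || exact: cvg_cst).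
have cdg : forall x, x \in `]x0 - 1, x0 + 1[ `\ x0 -> dg x != 0.
  move=> x; rewrite inE /= => -[_ /eqP /negbTE xx0]; rewrite /dg xx0.
  by rewrite mulf_eq0 negb_or subr_eq0 xx0 pnatr_eq0.
apply: (lhopital (in_ab x0) fdf gdg fa0 ga0 cdg).
have -> : (fun x => df x / dg x) = (fun x => u2 x / 2).
  apply/funext => x; rewrite /df /dg; case: eqP => [->//|/eqP xx0].
  rewrite invfM mulrACA divff ?mulr1 //; by rewrite subr_eq0.
apply: cvgM; [exact: cu2 | exact: cvg_cst].
Qed.

Lemma alg {R : realType} (h u u1 w w1 : R) : h != 0 ->
  (u * w1 - w * u1) / (u ^+ 2 + w ^+ 2) =
  ((u / h) * ((w1 * h - w) / h ^+ 2) - (w / h) * ((u1 * h - u) / h ^+ 2)) /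
  ((u / h) * (u / h) + (w / h) * (w / h)).
Proof.
move=> h0.
have e1 : (u / h) * ((w1 * h - w) / h ^+ 2) - (w / h) * ((u1 * h - u) / h ^+ 2)
   = (u * w1 - w * u1) / h ^+ 2 by field.
have e2 : (u / h) * (u / h) + (w / h) * (w / h) = (u ^+ 2 + w ^+ 2) / h ^+ 2 by field.
by rewrite e1 e2 invf_div mulrA divfK // expf_neq0.
Qed.

Lemma nz2 {R : realType} (a b c d : R) : a * d - b * c != 0 -> a * a + c * c != 0.
Proof.
apply: contra => /eqP H.
have ha : a = 0 by nra.
have hc : c = 0 by nra.
by rewrite ha hc !mul0r mulr0 subr0.
Qed.

Lemma slice {R : realType} (F : R -> R -> R) (w0 x0 : R) : Ck2 3 F ->
  [/\ forall x : R, is_derive x (1:R) (fun y => F y w0) (pdx F x w0),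
      forall x : R, is_derive x (1:R) (fun y => pdx F y w0) (pdx (pdx F) x w0) &
      {for x0, continuous (fun y => pdx (pdx F) y w0)}].
Proof.
move=> C; split.
- move=> x; have [_ /(_ isT x w0) [D _]] := C [::] isT.
  by rewrite /pdx derive1E; apply: derivableP.
- move=> x; have [_ /(_ isT x w0) [D _]] := C [:: true] isT.
  by rewrite {2}/pdx derive1E; apply: derivableP.
- have [Cc _] := C [:: true; true] isT.
  have Hf : {for x0, continuous (fun y : R => (y, w0))}.
    exact: (@cvg_pair _ _ _ _ (nbhs x0) (nbhs w0) _ _ _ id (fun=> w0) cvg_id (cvg_cst w0)).
  exact: (continuous_comp Hf (Cc (x0, w0))).
Qed.

Theorem mainTheorem6 (R : realType) (fr fi gr gi : R -> R) (x0 w0 : R) :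
  L2c fr fi -> L2c gr gi ->
  Ck2 3 (stftU fr fi gr gi) -> Ck2 3 (stftW fr fi gr gi) ->
  stftU fr fi gr gi x0 w0 = 0 -> stftW fr fi gr gi x0 w0 = 0 ->
  pdx (stftU fr fi gr gi) x0 w0 * pdw (stftW fr fi gr gi) x0 w0
    - pdw (stftU fr fi gr gi) x0 w0 * pdx (stftW fr fi gr gi) x0 w0 != 0 ->
  exists c : R,
    (fun x => phase_dx (stftU fr fi gr gi) (stftW fr fi gr gi) x w0)
      @ x0^' --> c.
Proof.
move=> _ _ CU CW U0 W0 det.
set U := stftU fr fi gr gi in CU U0 det *.
set W := stftW fr fi gr gi in CW W0 det *.
have [dU dU1 cU2] := slice U w0 x0 CU.
have [dW dW1 cW2] := slice W w0 x0 CW.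
have pU := key1 _ _ _ dU (isd_cont _ _ _ (dU1 x0)) U0.
have pW := key1 _ _ _ dW (isd_cont _ _ _ (dW1 x0)) W0.
have rU := key2 _ _ _ _ dU dU1 cU2 U0.
have rW := key2 _ _ _ _ dW dW1 cW2 W0.
have nz := nz2 _ _ _ _ det.
exists ((pdx U x0 w0 * (pdx (pdx W) x0 w0 / 2) - pdx W x0 w0 * (pdx (pdx U) x0 w0 / 2))
   * (pdx U x0 w0 * pdx U x0 w0 + pdx W x0 w0 * pdx W x0 w0)^-1).
pose p x := U x w0 / (x - x0).
pose q x := W x w0 / (x - x0).
pose r x := (pdx U x w0 * (x - x0) - U x w0) / (x - x0) ^+ 2.
pose s x := (pdx W x w0 * (x - x0) - W x w0) / (x - x0) ^+ 2.
apply: (@cvg_trans _ ((fun x => (p x * s x - q x * r x) * (p x * p x + q x * q x)^-1) @ x0^')).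
  apply: near_eq_cvg; near=> x.
  have hx : x - x0 != 0.
    rewrite subr_eq0; near: x; exact: nbhs_dnbhs_neq.
  by rewrite /phase_dx /= (alg _ _ _ _ _ hx).
apply: cvgM.
  apply: cvgB; apply: cvgM; [exact: pU | exact: rW | exact: pW | exact: rU].
apply: cvgV => //; apply: cvgD; apply: cvgM; [exact: pU | exact: pU | exact: pW | exact: pW].
Unshelve. all: by end_near.
Qed.
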